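(* Let $k\ge 0$ be an integer and let $G$ be an undirected graph of degeneracy $k$. Then $f(G)\leq \frac{k-1}{k+1}\,n(G)$ if $k$ is odd, and $f(G)\leq \frac{k}{k+2}\,n(G)$ if $k$ is even.
   Context: All graphs are finite and simple. $n(G)$ is the number of vertices and $f(G)$ is the minimum size of a feedback vertex set of $G$ (a set $F\subseteq V(G)$ with $G-F$ acyclic). An ordering $\phi$ of $V(G)$ is a $k$-elimination ordering if each vertex has at most $k$ neighbours preceding it in $\phi$; the degeneracy of $G$ is the least $k$ such that $G$ has a $k$-elimination ordering. *)

(* Defs.v *)
From mathcomp Require Import all_boot.
Set Implicit Arguments. Unset Strict Implicit. Unset Printing Implicit Defensive.

Definition simple_graph (T : finType) (e : rel T) : Prop :=
  symmetric e /\ irreflexive e.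

Definition nverts (T : finType) : nat := #|T|.

Definition has_cycle_in (T : finType) (e : rel T) (A : {set T}) : Prop :=
  exists s : seq T, [/\ uniq s, 3 <= size s, all (fun v => v \in A) s & cycle e s].

Definition feedback_vertex_set (T : finType) (e : rel T) (F : {set T}) : Prop :=
  ~ has_cycle_in e (~: F).

(* F is a minimum feedback vertex set, so #|F| = f(G). *)
Definition min_feedback_vertex_set (T : finType) (e : rel T) (F : {set T}) : Prop :=
  feedback_vertex_set e F /\
  forall F' : {set T}, feedback_vertex_set e F' -> #|F| <= #|F'|.

Definition elimination_ordering (T : finType) (e : rel T) (k : nat) (phi : seq T) : Prop :=
  [/\ uniq phi, forall v : T, v \in phi &
      forall (i : nat) (x0 : T), i < size phi ->
        count (e (nth x0 phi i)) (take i phi) <= k].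

Definition degeneracy (T : finType) (e : rel T) (k : nat) : Prop :=
  (exists phi, elimination_ordering e k phi) /\
  forall j, (exists phi, elimination_ordering e j phi) -> k <= j.

(* Main.v *)
Require Import Defs.
From mathcomp Require Import all_boot zify.
From Stdlib Require Import Lia Classical.
Set Implicit Arguments. Unset Strict Implicit. Unset Printing Implicit Defensive.
Lemma seq_max (T : eqType) (f : T -> nat) (s : seq T) :
  s != [::] -> exists2 x, x \in s & forall y, y \in s -> f y <= f x.
Proof.
elim: s => // a s IH _.
case: (eqVneq s [::]) => [->|ns].
  by exists a => [|y]; rewrite ?inE // => /eqP ->.
have [x xs Hx] := IH ns.
case: (leqP (f a) (f x)) => H.
  by exists x => [|y]; rewrite inE ?xs ?orbT // => /orP[/eqP->|/Hx].
exists a => [|y]; first by rewrite inE eqxx.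
by rewrite inE => /orP[/eqP->//|/Hx/leq_trans]; apply; apply: ltnW.
Qed.

Lemma count2 (T : eqType) (p : pred T) (s : seq T) y z :
  uniq s -> y != z -> y \in s -> z \in s -> p y -> p z -> 2 <= count p s.
Proof.
move=> us yz ys zs py pz.
rewrite -size_filter.
have -> : 2 = size [:: y; z] by [].
apply: uniq_leq_size; first by rewrite /= inE yz.
by move=> u; rewrite !inE mem_filter => /orP[]/eqP->; apply/andP.
Qed.

Lemma forest_lemma (T : finType) (e : rel T) (phi : seq T) (S : {set T}) :
  symmetric e -> uniq phi -> (forall v, v \in phi) ->
  (forall v, v \in S -> count (fun u => e v u && (u \in S)) (take (index v phi) phi) <= 1) ->
  ~ has_cycle_in e S.
Proof.
move=> esym uphi allphi HS [cy [ucy scy acy ccy]].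
have ne : cy != [::] by case: cy scy {ucy acy ccy}.
have [x xcy Hx] := seq_max (fun v => index v phi) ne.
have := rot_index xcy.
set cy' := rot _ _; set p := _ ++ _ => Hrot.
have ucy' : uniq (x :: p) by rewrite -Hrot rot_uniq.
have scy' : 3 <= size (x :: p) by rewrite -Hrot size_rot.
have ccy' : cycle e (x :: p) by rewrite -Hrot rot_cycle.
have mcy : forall u, u \in x :: p -> u \in cy by move=> u; rewrite -Hrot mem_rot.
clearbody p; clear Hrot cy'.
move: ucy' scy' ccy' mcy.
case: p => [|y q] //; case/lastP: q => [|q z] //.
move=> ucy' _ ccy' mcy.
have xS : x \in S by move/allP: acy; apply; apply: mcy; rewrite inE eqxx.
have yS : y \in S by move/allP: acy; apply; apply: mcy; rewrite !inE eqxx orbT.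
have zS : z \in S by move/allP: acy; apply; apply: mcy; rewrite !inE mem_rcons inE eqxx !orbT.
move: ccy'; rewrite /= rcons_path last_rcons => /and3P[exy _ ezx].
move: ucy'; rewrite /= !inE mem_rcons inE negb_or => /andP[/andP[xy /norP[xz _]] /andP[yn _]].
have yz : y != z by apply: contra yn => /eqP->; rewrite mem_rcons inE eqxx.
have lt u : u \in cy -> u != x -> index u phi < index x phi.
  move=> ucyu ux; rewrite ltn_neqAle Hx // andbT.
  by apply: contra ux => /eqP/(congr1 (nth x phi)); rewrite !nth_index // => ->.
have := HS x xS.
suff : 2 <= count (fun u : T => e x u && (u \in S)) (take (index x phi) phi) by move=> /leq_trans H /H.
apply: (count2 (y := y) (z := z)) => //.
- exact: take_uniq.
- rewrite in_take // lt //; first by apply: mcy; rewrite !inE eqxx orbT.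
  by rewrite eq_sym.
- rewrite in_take // lt //; first by apply: mcy; rewrite !inE mem_rcons inE eqxx !orbT.
  by rewrite eq_sym.
- by rewrite exy.
- by rewrite esym ezx.
Qed.
Lemma sum_count (T : eqType) d (c : T -> 'I_d) (p : pred T) (s : seq T) :
  \sum_(j < d) count (fun u => p u && (c u == j)) s = count p s.
Proof.
elim: s => [|a s IH] /=; first by rewrite big1.
rewrite big_split /= IH; congr (_ + _).
rewrite (bigD1 (c a)) //= eqxx andbT big1 ?addn0 // => j /negbTE.
by rewrite eq_sym => ->; rewrite andbF.
Qed.

Lemma pick_class (T : eqType) d (c : T -> 'I_d.+1) (p : pred T) (s : seq T) :
  count p s <= d.*2.+1 -> exists j, count (fun u => p u && (c u == j)) s <= 1.
Proof.
move=> H.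
case: (boolP [exists j, count (fun u => p u && (c u == j)) s <= 1]).
  by case/existsP=> j Hj; exists j.
rewrite negb_exists => /forallP Hall.
have : \sum_(j < d.+1) 2 <= \sum_(j < d.+1) count (fun u => p u && (c u == j)) s.
  by apply: leq_sum => j _; have := Hall j; rewrite ltnNge.
rewrite sum_count sum_nat_const card_ord => H2.
have := leq_trans H2 H; rewrite -muln2; lia.
Qed.

Lemma color_exists (T : eqType) (e : rel T) d (s : seq T) :
  uniq s ->
  (forall v, v \in s -> count (e v) (take (index v s) s) <= d.*2.+1) ->
  exists c : T -> 'I_d.+1, forall v, v \in s ->
     count (fun u => e v u && (c u == c v)) (take (index v s) s) <= 1.
Proof.
elim/last_ind: s => [|p w IH] us H.
  by exists (fun _ => ord0).
move: us; rewrite rcons_uniq => /andP[wp up].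
have Hidx v : v \in p -> take (index v (rcons p w)) (rcons p w) = take (index v p) p.
  by move=> vp; rewrite -cats1 index_cat vp takel_cat // index_size.
have Hw : take (index w (rcons p w)) (rcons p w) = p.
  by rewrite -cats1 index_cat (negbTE wp) /= eqxx addn0 take_size_cat.
have [c Hc] : exists c : T -> 'I_d.+1, forall v, v \in p ->
     count (fun u => e v u && (c u == c v)) (take (index v p) p) <= 1.
  apply: IH => // v vp; rewrite -Hidx //; apply: H.
  by rewrite mem_rcons inE vp orbT.
have [j Hj] : exists j, count (fun u => e w u && (c u == j)) p <= 1.
  apply: pick_class; rewrite -{1}Hw; apply: H.
  by rewrite mem_rcons inE eqxx.
exists (fun u => if u == w then j else c u) => v.
rewrite mem_rcons inE => /orP[/eqP->|vp].
  rewrite Hw eqxx; apply: leq_trans Hj; rewrite leq_eqVlt; apply/orP; left; apply/eqP.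
  apply: eq_in_count => u uin /=.
  by have -> : (u == w) = false by apply/negbTE; apply: contra wp => /eqP <-.
rewrite Hidx //.
have -> : (v == w) = false by apply/negbTE; apply: contra wp => /eqP <-.
apply: leq_trans (Hc v vp); rewrite leq_eqVlt; apply/orP; left; apply/eqP.
apply: eq_in_count => u /mem_take uin /=.
by have -> : (u == w) = false by apply/negbTE; apply: contra wp => /eqP <-.
Qed.

Lemma big_class (T : finType) d (c : T -> 'I_d.+1) :
  exists j, #|T| <= d.+1 * #|[set u | c u == j]|.
Proof.
have Hcard j : #|[set u | c u == j]| = count (fun u => predT u && (c u == j)) (enum T).
  rewrite cardsE cardE /enum_mem size_filter count_filter; apply: eq_count => u /=.
  by rewrite andbT.
have ne : enum 'I_d.+1 != [::].
  by apply/eqP => H; have := mem_enum 'I_d.+1 ord0; rewrite H.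
have [j _ Hj] := seq_max (fun j => #|[set u | c u == j]|) ne.
exists j.
have -> : #|T| = \sum_(i < d.+1) #|[set u | c u == i]|.
  by rewrite (eq_bigr _ (fun i _ => Hcard i)) sum_count count_predT cardE.
apply: (@leq_trans (\sum_(i < d.+1) #|[set u | c u == j]|)); last by rewrite sum_nat_const card_ord.
by apply: leq_sum => i _; apply: Hj; rewrite mem_enum.
Qed.

Lemma min_fvs_exists (T : finType) (e : rel T) (F : {set T}) :
  feedback_vertex_set e F ->
  exists F0, min_feedback_vertex_set e F0 /\ #|F0| <= #|F|.
Proof.
move: {2}#|F| (leqnn #|F|) => n; elim: n F => [|n IH] F HF Fv.
  exists F; split => //; split => // F' _; move: HF; rewrite leqn0 => /eqP->//.
case: (classic (exists F', feedback_vertex_set e F' /\ #|F'| < #|F|)).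
  case=> F' [F'v F'lt].
  have [F0 [H0 H1]] := IH F' (leq_trans F'lt HF) F'v.
  by exists F0; split => //; apply: leq_trans H1 (ltnW F'lt).
move=> Hn; exists F; split => //; split => // F' F'v.
rewrite leqNgt; apply/negP => H; apply: Hn; by exists F'.
Qed.

Theorem mainTheorem3 (T : finType) (e : rel T) (k : nat) :
  simple_graph e -> degeneracy e k ->
  exists F : {set T}, min_feedback_vertex_set e F /\
    (if odd k then (k + 1) * #|F| <= (k - 1) * nverts T
     else (k + 2) * #|F| <= k * nverts T).
Proof.
move=> [esym eirr] [[phi [uphi allphi Hphi]] _].
set d := k./2.
have Hk : k <= d.*2.+1.
  have := odd_double_half k; rewrite -/d; case: (odd k) => /= <-; lia.
have H : forall v, v \in phi -> count (e v) (take (index v phi) phi) <= d.*2.+1.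
  move=> v vp; have := Hphi (index v phi) v; rewrite index_mem nth_index // => /(_ vp) H.
  exact: leq_trans H Hk.
have [c Hc] := color_exists uphi H.
have [j Hj] := big_class c.
set S := [set u | c u == j].
have Sforest : ~ has_cycle_in e S.
  apply: (forest_lemma esym uphi allphi) => v; rewrite inE => /eqP cv.
  apply: leq_trans (Hc v (allphi v)); rewrite leq_eqVlt; apply/orP; left; apply/eqP.
  by apply: eq_count => u; rewrite inE cv.
have Fv : feedback_vertex_set e (~: S) by rewrite /feedback_vertex_set setCK.
have [F0 [HF0 Hle]] := min_fvs_exists Fv.
exists F0; split => //.
have HC := cardsC S.
rewrite /nverts.
have := odd_double_half k; rewrite -/d -muln2.
move: Hj Hle HC; move: #|T| #|S| #|~: S| #|F0| => n s c' f.
case: (odd k) => /= Hj Hle HC Hkd; nia.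
Qed.
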